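(* For all $\alpha,\beta\ge1$, \[ \Phi(\alpha,\beta)=\max\bigl\{R(AB):\ A,B \text{ are } 2\times 2 \text{ matrices with strictly positive entries},\ R(A)\le\alpha,\ R(B)\le\beta\bigr\}, \] and in particular the maximum is attained.
   Context: For a $2\times2$ matrix $A=(a_{ij})$ with strictly positive entries, $F(A)=\frac{a_{11}a_{22}}{a_{12}a_{21}}$ and the distortion is $R(A)=\max\{F(A),1/F(A)\}$. The envelope function is $\Phi(\alpha,\beta)=\left(\frac{1+\sqrt{\alpha\beta}}{\sqrt{\alpha}+\sqrt{\beta}}\right)^2$. *)

(* Defs.v *)
From HB Require Import structures.
From mathcomp Require Import all_boot all_order all_algebra.
From mathcomp Require Import reals.
Set Implicit Arguments. Unset Strict Implicit. Unset Printing Implicit Defensive.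
Import Order.TTheory GRing.Theory Num.Theory.
Local Open Scope ring_scope.

Definition i1 : 'I_2 := ord0.
Definition i2 : 'I_2 := ord_max.

Definition pos_mx (R : realType) (A : 'M[R]_2) : Prop :=
  forall i j : 'I_2, 0 < A i j.

Definition Fmx (R : realType) (A : 'M[R]_2) : R :=
  (A i1 i1 * A i2 i2) / (A i1 i2 * A i2 i1).

Definition distortion (R : realType) (A : 'M[R]_2) : R :=
  Num.max (Fmx A) (Fmx A)^-1.

Definition Phi (R : realType) (a b : R) : R :=
  ((1 + Num.sqrt (a * b)) / (Num.sqrt a + Num.sqrt b)) ^+ 2.

(* Main.v *)
Require Import Defs.
From HB Require Import structures.
From mathcomp Require Import all_boot all_order all_algebra.
From mathcomp Require Import reals.
From mathcomp Require Import ring lra.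
Import Order.TTheory GRing.Theory Num.Theory.
Local Open Scope ring_scope.

Lemma sge0 {R : realFieldType} {a b : R} : a <= b -> 0 <= b - a.
Proof. by rewrite subr_ge0. Qed.
Lemma ngt0 {R : realFieldType} {a : R} : a < 0 -> 0 <= - a.
Proof. by rewrite oppr_ge0 => /ltW. Qed.

Lemma core (R : realFieldType) (p q s x y : R) : 1 <= p -> 1 <= q -> 0 < s -> 0 < x -> 0 < y ->
  x <= p^+2 -> 1 <= p^+2 * x -> y <= q^+2 -> 1 <= q^+2 * y ->
  (p+q)^+2 * ((1+s)*(1+s*x*y)) <= (1+p*q)^+2 * ((1+s*x)*(1+s*y)).
Proof.
move=> hp hq hs hx hy hx1 hx2 hy1 hy2.
set P := p^+2 in hx1 hx2 *; set Q := q^+2 in hy1 hy2 *.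
set c := (1+p*q)^+2; set d := (p+q)^+2.
have hP1 : 1 <= P by rewrite /P; nra.
have hQ1 : 1 <= Q by rewrite /Q; nra.
have hd : 0 < d by rewrite /d; nra.
have hcd : c - d = (P-1)*(Q-1) by rewrite /c /d /P /Q; ring.
have hcd' : d <= c by have := mulr_ge0 (sge0 hP1) (sge0 hQ1); lra.
have PQ0 : 0 <= (P-1)*(Q-1) by apply: mulr_ge0; lra.
have C1 : 0 <= c*(P+s)*(Q+s) - d*(1+s)*(P*Q+s).
  have -> : c*(P+s)*(Q+s) - d*(1+s)*(P*Q+s) = (P-1)*(Q-1)*(s-p*q)^+2
    by rewrite /c /d /P /Q; ring.
  by apply: mulr_ge0 => //; apply: sqr_ge0.
have C2 : 0 <= c*(1+s*P)*(1+s*Q) - d*(1+s)*(1+s*P*Q).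
  have -> : c*(1+s*P)*(1+s*Q) - d*(1+s)*(1+s*P*Q) = (P-1)*(Q-1)*(p*q*s-1)^+2
    by rewrite /c /d /P /Q; ring.
  by apply: mulr_ge0 => //; apply: sqr_ge0.
have C3 : 0 <= c*(1+s*P)*(Q+s) - d*(1+s)*(Q+s*P).
  have -> : c*(1+s*P)*(Q+s) - d*(1+s)*(Q+s*P) = (c-d)*((1+s*P)*(Q+s)) + d*(s*((P-1)*(Q-1)))
    by ring.
  have sP := mulr_ge0 (ltW hs) (le_trans ler01 hP1).
  have sQ := mulr_ge0 (ltW hs) (le_trans ler01 hQ1).
  apply: addr_ge0; apply: mulr_ge0; try lra; apply: mulr_ge0; lra.
have C4 : 0 <= c*(P+s)*(1+s*Q) - d*(1+s)*(P+s*Q).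
  have -> : c*(P+s)*(1+s*Q) - d*(1+s)*(P+s*Q) = (c-d)*((P+s)*(1+s*Q)) + d*(s*((P-1)*(Q-1)))
    by ring.
  have sP := mulr_ge0 (ltW hs) (le_trans ler01 hP1).
  have sQ := mulr_ge0 (ltW hs) (le_trans ler01 hQ1).
  apply: addr_ge0; apply: mulr_ge0; try lra; apply: mulr_ge0; lra.
rewrite -subr_ge0.
set k := c*s*(1+s*y) - d*(1+s)*s*y.
have HE : c * ((1+s*x)*(1+s*y)) - d * ((1+s)*(1+s*x*y)) = (c*(1+s*y) - d*(1+s)) + x*k
  by rewrite /k; ring.
rewrite HE.
have [hk|hk] := lerP 0 k.
- have h1 := mulr_ge0 hk (sge0 hx2).
  set u1 := P*c*s + c*s^+2 - d*(1+s)*s.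
  suff : 0 <= P * ((c*(1+s*y) - d*(1+s)) + x*k).
    rewrite pmulr_rge0 //; lra.
  have G : P*(c*(1+s*y) - d*(1+s)) + k = (P*c - P*d*(1+s) + c*s) + y*u1
    by rewrite /k /u1; ring.
  suff : 0 <= P*(c*(1+s*y) - d*(1+s)) + k.
    have -> : P * ((c*(1+s*y) - d*(1+s)) + x*k) = P*(c*(1+s*y) - d*(1+s)) + k + (k*(P*x-1)) by ring.
    move=> h2; apply: addr_ge0 => //.
  rewrite G.
  have [hm|hm] := lerP 0 u1.
  + have h3 := mulr_ge0 hm (sge0 hy2).
    suff : 0 <= Q * ((P*c - P*d*(1+s) + c*s) + y*u1) by rewrite pmulr_rge0 //; lra.
    have -> : Q * ((P*c - P*d*(1+s) + c*s) + y*u1) = (c*(P+s)*(Q+s) - d*(1+s)*(P*Q+s)) + u1*(Q*y-1)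
      by rewrite /u1; ring.
    exact: addr_ge0.
  + have h3 := mulr_ge0 (ngt0 hm) (sge0 hy1).
    have -> : (P*c - P*d*(1+s) + c*s) + y*u1 = (c*(P+s)*(1+s*Q) - d*(1+s)*(P+s*Q)) + (-u1)*(Q-y)
      by rewrite /u1; ring.
    exact: addr_ge0.
- have h1 := mulr_ge0 (ngt0 hk) (sge0 hx1).
  set u2 := c*s + c*s^+2*P - d*(1+s)*s*P.
  have -> : (c*(1+s*y) - d*(1+s)) + x*k = ((c*(1+s*P) - d*(1+s)) + y*u2) + (-k)*(P-x)
    by rewrite /k /u2; ring.
  apply: addr_ge0 => //.
  have [hm|hm] := lerP 0 u2.
  + have h3 := mulr_ge0 hm (sge0 hy2).
    suff : 0 <= Q * ((c*(1+s*P) - d*(1+s)) + y*u2) by rewrite pmulr_rge0 //; lra.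
    have -> : Q * ((c*(1+s*P) - d*(1+s)) + y*u2) = (c*(1+s*P)*(Q+s) - d*(1+s)*(Q+s*P)) + u2*(Q*y-1)
      by rewrite /u2; ring.
    exact: addr_ge0.
  + have h3 := mulr_ge0 (ngt0 hm) (sge0 hy1).
    have -> : (c*(1+s*P) - d*(1+s)) + y*u2 = (c*(1+s*P)*(1+s*Q) - d*(1+s)*(1+s*P*Q)) + (-u2)*(Q-y)
      by rewrite /u2; ring.
    exact: addr_ge0.
Qed.

Ltac nz := repeat (apply/andP; split); apply: lt0r_neq0; nra.

Lemma core2 (R : realFieldType) (p q s x y : R) : 1 <= p -> 1 <= q -> 0 < s -> 0 < x -> 0 < y ->
  x <= p^+2 -> x^-1 <= p^+2 -> y <= q^+2 -> y^-1 <= q^+2 ->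
  ((1+s)*(1+s*x*y)) / ((1+s*x)*(1+s*y)) <= (1+p*q)^+2 / (p+q)^+2.
Proof.
move=> hp hq hs hx hy h1 h2 h3 h4.
have hx' : 1 <= p^+2 * x.
  by rewrite -(ler_pdivrMr _ _ hx) div1r.
have hy' : 1 <= q^+2 * y.
  by rewrite -(ler_pdivrMr _ _ hy) div1r.
have H := @core _ p q s x y hp hq hs hx hy h1 hx' h3 hy'.
have hD : 0 < (1+s*x)*(1+s*y).
  by apply: mulr_gt0; apply: addr_gt0 => //; apply: mulr_gt0.
have hd : 0 < (p+q)^+2 by apply: exprn_gt0; lra.
rewrite -subr_ge0.
have -> : (1+p*q)^+2 / (p+q)^+2 - ((1+s)*(1+s*x*y)) / ((1+s*x)*(1+s*y))
  = ((1+p*q)^+2 * ((1+s*x)*(1+s*y)) - (p+q)^+2 * ((1+s)*(1+s*x*y)))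
    / ((p+q)^+2 * ((1+s*x)*(1+s*y))).
  by field; nz.
apply: divr_ge0; first by rewrite subr_ge0.
by apply: mulr_ge0; apply: ltW.
Qed.

Lemma mulmx2 {R : realType} (A B : 'M[R]_2) i j :
  (A *m B) i j = A i i1 * B i1 j + A i i2 * B i2 j.
Proof.
rewrite mxE big_ord_recr /= big_ord_recr /= big_ord0 add0r.
have -> : widen_ord (m:=2) (leqnSn 1) ord_max = i1 by apply: val_inj.
by [].
Qed.

Definition mk2 {R : realType} (a b c d : R) : 'M[R]_2 :=
  \matrix_(i, j) if i == i1 then (if j == i1 then a else b)
                 else (if j == i1 then c else d).

Lemma mk2E {R : realType} (a b c d : R) :
  [/\ mk2 a b c d i1 i1 = a, mk2 a b c d i1 i2 = b,
      mk2 a b c d i2 i1 = c & mk2 a b c d i2 i2 = d].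
Proof. by rewrite !mxE. Qed.

Lemma le_dist {R : realType} {A : 'M[R]_2} {a : R} :
  distortion A <= a -> Fmx A <= a /\ (Fmx A)^-1 <= a.
Proof. by rewrite /distortion ge_max => /andP. Qed.

Theorem mainTheorem4 (R : realType) (alpha beta : R) :
  1 <= alpha -> 1 <= beta ->
  (forall A B : 'M[R]_2, pos_mx A -> pos_mx B ->
     distortion A <= alpha -> distortion B <= beta ->
     distortion (A *m B) <= Phi alpha beta) /\
  (exists A B : 'M[R]_2, [/\ pos_mx A, pos_mx B,
     distortion A <= alpha, distortion B <= beta &
     distortion (A *m B) = Phi alpha beta]).
Proof.
move=> ha hb.
set p := Num.sqrt alpha; set q := Num.sqrt beta.
have hP : p^+2 = alpha by rewrite sqr_sqrtr //; lra.
have hQ : q^+2 = beta by rewrite sqr_sqrtr //; lra.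
have hp0 : 0 <= p := sqrtr_ge0 _.
have hq0 : 0 <= q := sqrtr_ge0 _.
have hp : 1 <= p by nra.
have hq : 1 <= q by nra.
have hPhi : Phi alpha beta = (1+p*q)^+2 / (p+q)^+2.
  by rewrite /Phi sqrtrM ?expr_div_n //; lra.
have hd : 0 < (p+q)^+2 by apply: exprn_gt0; lra.
have hcd : (p+q)^+2 <= (1+p*q)^+2.
  have : 0 <= (p^+2-1)*(q^+2-1) by apply: mulr_ge0; nra.
  have -> : (1+p*q)^+2 = (p+q)^+2 + (p^+2-1)*(q^+2-1) by ring.
  lra.
have hPhi1 : 1 <= Phi alpha beta by rewrite hPhi ler_pdivlMr // mul1r.
split.
- move=> A B pA pB dA dB.
  have [xa xi] := le_dist dA.
  have [yb yi] := le_dist dB.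
  rewrite -hP in xa xi; rewrite -hQ in yb yi.
  move: xa xi yb yi.
  rewrite /distortion /Fmx !mulmx2.
  have a0 := pA i1 i1; have b0 := pA i1 i2; have c0 := pA i2 i1; have d0 := pA i2 i2.
  have e0 := pB i1 i1; have f0 := pB i1 i2; have g0 := pB i2 i1; have h0 := pB i2 i2.
  move: a0 b0 c0 d0 e0 f0 g0 h0.
  set a := A i1 i1; set b := A i1 i2; set c := A i2 i1; set d := A i2 i2.
  set e := B i1 i1; set f := B i1 i2; set g := B i2 i1; set h := B i2 i2.
  move=> a0 b0 c0 d0 e0 f0 g0 h0 xa xi yb yi.
  set s := b*g/(a*e); set x := a*d/(b*c); set y := e*h/(f*g).
  have s0 : 0 < s by rewrite /s; apply: divr_gt0; apply: mulr_gt0.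
  have x0 : 0 < x by rewrite /x; apply: divr_gt0; apply: mulr_gt0.
  have y0 : 0 < y by rewrite /y; apply: divr_gt0; apply: mulr_gt0.
  have sx0 : 0 < s*x := mulr_gt0 s0 x0.
  have sy0 : 0 < s*y := mulr_gt0 s0 y0.
  have sxy0 : 0 < s*x*y := mulr_gt0 sx0 y0.
  have EF : (a * e + b * g) * (c * f + d * h) / ((a * f + b * h) * (c * e + d * g))
      = ((1+s)*(1+s*x*y)) / ((1+s*x)*(1+s*y)).
    rewrite /s /x /y; field.
    by rewrite !(lt0r_neq0, mulr_gt0, addr_gt0, divr_gt0, ltr01).
  rewrite ge_max EF hPhi; apply/andP; split.
    exact: core2.
  have -> : (((1+s)*(1+s*x*y)) / ((1+s*x)*(1+s*y)))^-1
     = ((1+(s*y))*(1+(s*y)*x*y^-1)) / ((1+(s*y)*x)*(1+(s*y)*y^-1)).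
    field.
    by rewrite !(lt0r_neq0, mulr_gt0, addr_gt0, divr_gt0, ltr01, invr_gt0).
  apply: core2 => //; first by rewrite invr_gt0.
  by rewrite invrK.
- have p0 : 0 < p by lra.
  exists (mk2 1 1 1 (p^+2)), (mk2 (p*q) 1 1 (q/p)).
  have [A11 A12 A21 A22] := mk2E 1 1 1 (p^+2).
  have [B11 B12 B21 B22] := mk2E (p*q) 1 1 (q/p).
  have P1 : 1 <= p^+2 by nra.
  have Q1 : 1 <= q^+2 by nra.
  split.
  + by move=> i j; rewrite !mxE; case: ifP => _; case: ifP => _ //;
       apply: (@lt_le_trans _ _ 1) => //; lra.
  + move=> i j; rewrite !mxE; case: ifP => _; case: ifP => _ //;
      [ apply: mulr_gt0; lra | apply: divr_gt0; lra ].
  + rewrite /distortion /Fmx A11 A12 A21 A22 !mul1r divr1 -hP max_l //.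
    apply: (le_trans _ P1); rewrite invf_le1; lra.
  + rewrite /distortion /Fmx B11 B12 B21 B22 !mul1r divr1.
    have -> : p*q*(q/p) = q^+2 by field; lra.
    rewrite -hQ max_l //.
    apply: (le_trans _ Q1); rewrite invf_le1; lra.
  + rewrite /distortion /Fmx !mulmx2 A11 A12 A21 A22 B11 B12 B21 B22.
    have -> : (1 * (p * q) + 1 * 1) * (1 * 1 + p ^+ 2 * (q / p)) /
      ((1 * 1 + 1 * (q / p)) * (1 * (p * q) + p ^+ 2 * 1)) = (1+p*q)^+2 / (p+q)^+2.
      by field; nz.
    have hc1 : 1 <= (1+p*q)^+2/(p+q)^+2 by rewrite -hPhi.
    rewrite hPhi max_l //; apply: (le_trans _ hc1); rewrite invf_le1 //.
    exact: lt_le_trans ltr01 hc1.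
Qed.
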